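(* (a) Let $\Phi=B_n$ and let $D\subset\Phi^+$ be an orthogonal subset with $\varepsilon_1\in D$ and containing no root $\varepsilon_k$ with $k\ge2$ (so $D\cap\mathcal C_1=\{\varepsilon_1\}$). Let $\tilde\Phi^+=\{\varepsilon_a\pm\varepsilon_b:2\le a<b\le n\}$ (i.e. $\Phi^+\setminus(\mathcal C_1\cup\mathcal R_0)$, a positive system of type $D_{n-1}$), $\tilde D=D\cap\tilde\Phi^+=D\setminus\{\varepsilon_1\}$, $\tilde\sigma=\prod_{\beta\in\tilde D}r_\beta$, and $l'(\tilde\sigma)=\#\{\alpha\in\tilde\Phi^+:\tilde\sigma(\alpha)\notin\tilde\Phi^+\}$. Then $$l(\sigma)=l'(\tilde\sigma)+|\mathcal C_1|+2\cdot\#\{\beta\in\tilde D:\mathrm{row}(\beta)<0\},$$ where $|\mathcal C_1|=2n-1$ and $\mathrm{row}(\beta)<0$ means $\beta=\varepsilon_a+\varepsilon_b$ for some $a<b$. (b) Let $\Phi=C_n$ and let $D\subset\Phi^+$ be an orthogonal subset with $D\cap\mathcal C_1=\{2\varepsilon_1\}$. Let $\tilde\Phi^+=\Phi^+\setminus\mathcal C_1$ (a positive system of type $C_{n-1}$ in the coordinates $\varepsilon_2,\dots,\varepsilon_n$), $\tilde D=D\cap\tilde\Phi^+$, $\tilde\sigma=\prod_{\beta\in\tilde D}r_\beta$ and $l'(\tilde\sigma)=\#\{\alpha\in\tilde\Phi^+:\tilde\sigma(\alpha)\notin\tilde\Phi^+\}$. Then $l(\sigma)=l'(\tilde\sigma)+|\mathcal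 C_1|$, where $|\mathcal C_1|=2n-1$.
   Context: Let $\Phi$ be a root system of type $B_n$, $C_n$ or $D_n$ in $\mathbb R^n$ with standard basis $\varepsilon_1,\dots,\varepsilon_n$ and positive roots $\Phi^+=\{\varepsilon_i\pm\varepsilon_j:1\le i<j\le n\}\cup\Phi_1^+$, where $\Phi_1^+=\emptyset$ for $D_n$, $\{\varepsilon_i\}$ for $B_n$, $\{2\varepsilon_i\}$ for $C_n$. $D\subset\Phi^+$ is orthogonal if its roots are pairwise orthogonal. $r_\beta$ denotes the reflection in the hyperplane orthogonal to $\beta$, $\sigma=\prod_{\beta\in D}r_\beta$, and $l(\sigma)=\#\{\alpha\in\Phi^+:\sigma(\alpha)\in-\Phi^+\}$ (the length of $\sigma$ in the Weyl group). $\mathrm{col}(\varepsilon_i\pm\varepsilon_j)=\mathrm{col}(\varepsilon_i)=\mathrm{col}(2\varepsilon_i)=i$; $\mathrm{row}(\varepsilon_i\pm\varepsilon_j)=\mp j$, $\mathrm{row}(\varepsilon_i)=0$, $\mathrm{row}(2\varepsilon_i)=-i$; $\mathcal R_i=\{\alpha\in\Phi^+:\mathrm{row}(\alpha)=i\}$, $\mathcal C_j=\{\alpha\in\Phi^+:\mathrm{col}(\alpha)=j\}$. *)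

(* Defs.v *)
From HB Require Import structures.
From mathcomp Require Import all_boot all_order all_algebra.
Set Implicit Arguments. Unset Strict Implicit. Unset Printing Implicit Defensive.
Import Order.TTheory GRing.Theory Num.Theory.
Local Open Scope ring_scope.

Inductive rtype := TB | TC | TD.

Section Roots.
Variable n : nat.

(* standard basis vector eps_i (index i : 'I_n, i.e. eps_{i+1} in the paper) *)
Definition eps (i : 'I_n) : 'rV[rat]_n := delta_mx 0 i.

Definition dot (u v : 'rV[rat]_n) : rat := \sum_(k < n) u 0 k * v 0 k.

Definition refl (b x : 'rV[rat]_n) : 'rV[rat]_n := x - ((2 * dot x b) / dot b b) *: b.

Definition minusroots : seq 'rV[rat]_n :=
  [seq eps i - eps j | i <- enum 'I_n, j <- [seq j <- enum 'I_n | (nat_of_ord i < nat_of_ord j)%N]].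
(* eps_i + eps_j, i<j  (the roots with row < 0) *)
Definition plusroots : seq 'rV[rat]_n :=
  [seq eps i + eps j | i <- enum 'I_n, j <- [seq j <- enum 'I_n | (nat_of_ord i < nat_of_ord j)%N]].
Definition shortroots : seq 'rV[rat]_n := [seq eps i | i <- enum 'I_n].
Definition longroots : seq 'rV[rat]_n := [seq 2%:R *: eps i | i <- enum 'I_n].

Definition posroots (t : rtype) : seq 'rV[rat]_n :=
  minusroots ++ plusroots ++
  match t with TB => shortroots | TC => longroots | TD => [::] end.

Definition orthoset (t : rtype) (D : seq 'rV[rat]_n) : Prop :=
  [/\ uniq D, {subset D <= posroots t} &
      forall a b, a \in D -> b \in D -> a != b -> dot a b = 0].

(* sigma = prod_{b in D} r_b (the reflections commute since D is orthogonal) *)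
Definition sigma (D : seq 'rV[rat]_n) (x : 'rV[rat]_n) : 'rV[rat]_n :=
  foldr refl x D.

Definition wlength (Phi : seq 'rV[rat]_n) (s : 'rV[rat]_n -> 'rV[rat]_n) : nat :=
  count (fun a => - s a \in Phi) Phi.

Definition wlength' (tPhi : seq 'rV[rat]_n) (s : 'rV[rat]_n -> 'rV[rat]_n) : nat :=
  count (fun a => s a \notin tPhi) tPhi.

End Roots.

(* In dimension n.+1, index ord0 is the first coordinate eps_1. *)
Definition colone (n : nat) (t : rtype) : seq 'rV[rat]_n.+1 :=
  [seq a : 'rV[rat]_n.+1 <- @posroots n.+1 t | a 0 ord0 != 0].

Definition tPhiB (n : nat) : seq 'rV[rat]_n.+1 :=
  [seq a : 'rV[rat]_n.+1 <- @posroots n.+1 TB | (a 0 ord0 == 0) && (a \notin @shortroots n.+1)].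

Definition tPhiC (n : nat) : seq 'rV[rat]_n.+1 :=
  [seq a : 'rV[rat]_n.+1 <- @posroots n.+1 TC | a 0 ord0 == 0].

(* Main.v *)
Require Import Defs.
From HB Require Import structures.
From mathcomp Require Import all_boot all_order all_algebra.
Import Order.TTheory GRing.Theory Num.Theory.
Set Implicit Arguments. Unset Strict Implicit. Unset Printing Implicit Defensive.
Local Open Scope ring_scope.

Section Basic.
Variable m : nat.
Local Notation V := 'rV[rat]_m.

Lemma epsE (i k : 'I_m) : eps i 0 k = (k == i)%:R.
Proof. by rewrite /eps mxE eqxx. Qed.

Lemma dotC (u v : V) : dot u v = dot v u.
Proof. by rewrite /dot; apply: eq_bigr => k _; rewrite mulrC. Qed.

Lemma dotDl (u v w : V) : dot (u + v) w = dot u w + dot v w.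
Proof. by rewrite /dot -big_split; apply: eq_bigr => k _; rewrite mxE mulrDl. Qed.

Lemma dotNl (u w : V) : dot (- u) w = - dot u w.
Proof. by rewrite /dot -sumrN; apply: eq_bigr => k _; rewrite mxE mulNr. Qed.

Lemma dotZl c (u w : V) : dot (c *: u) w = c * dot u w.
Proof. by rewrite /dot mulr_sumr; apply: eq_bigr => k _; rewrite mxE mulrA. Qed.

Lemma dotBl (u v w : V) : dot (u - v) w = dot u w - dot v w.
Proof. by rewrite dotDl dotNl. Qed.

Lemma dotDr (u v w : V) : dot w (u + v) = dot w u + dot w v.
Proof. by rewrite dotC dotDl !(dotC w). Qed.
Lemma dotNr (u w : V) : dot w (- u) = - dot w u.
Proof. by rewrite dotC dotNl dotC. Qed.
Lemma dotZr c (u w : V) : dot w (c *: u) = c * dot w u.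
Proof. by rewrite dotC dotZl dotC. Qed.
Lemma dotBr (u v w : V) : dot w (u - v) = dot w u - dot w v.
Proof. by rewrite dotDr dotNr. Qed.

Lemma dot_eps_r (x : V) i : dot x (eps i) = x 0 i.
Proof.
rewrite /dot (bigD1 i) //= epsE eqxx mulr1 big1 ?addr0 // => k /negbTE kn.
by rewrite epsE kn mulr0.
Qed.
Lemma dot_eps_l (x : V) i : dot (eps i) x = x 0 i.
Proof. by rewrite dotC dot_eps_r. Qed.
Lemma dot_eps (i j : 'I_m) : dot (eps i) (eps j) = (i == j)%:R.
Proof. by rewrite dot_eps_r epsE eq_sym. Qed.

Lemma dot0l (x : V) : dot (0 : V) x = 0.
Proof. by rewrite /dot big1 // => k _; rewrite mxE mul0r. Qed.

End Basic.

Section Roots2.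
Variable m : nat.
Local Notation V := 'rV[rat]_m.

Lemma mem_minus (i j : 'I_m) : (i < j)%N -> eps i - eps j \in @minusroots m.
Proof.
move=> ij; apply/allpairsPdep; exists i, j; split => //; first by rewrite mem_enum.
by rewrite mem_filter ij mem_enum.
Qed.

Lemma mem_plus (i j : 'I_m) : (i < j)%N -> eps i + eps j \in @plusroots m.
Proof.
move=> ij; apply/allpairsPdep; exists i, j; split => //; first by rewrite mem_enum.
by rewrite mem_filter ij mem_enum.
Qed.

Lemma mem_short (i : 'I_m) : eps i \in @shortroots m.
Proof. by apply/mapP; exists i; rewrite ?mem_enum. Qed.

Lemma mem_long (i : 'I_m) : 2%:R *: eps i \in @longroots m.
Proof. by apply/mapP; exists i; rewrite ?mem_enum. Qed.

Lemma minusP (a : V) : a \in @minusroots m -> exists i j : 'I_m, (i < j)%N /\ a = eps i - eps j.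
Proof. by case/allpairsPdep => i [j [_ + ->]]; rewrite mem_filter => /andP[ij _]; exists i, j. Qed.

Lemma plusP (a : V) : a \in @plusroots m -> exists i j : 'I_m, (i < j)%N /\ a = eps i + eps j.
Proof. by case/allpairsPdep => i [j [_ + ->]]; rewrite mem_filter => /andP[ij _]; exists i, j. Qed.

Lemma shortP (a : V) : a \in @shortroots m -> exists i, a = eps i.
Proof. by case/mapP => i _ ->; exists i. Qed.

Lemma longP (a : V) : a \in @longroots m -> exists i, a = 2%:R *: eps i.
Proof. by case/mapP => i _ ->; exists i. Qed.

Lemma posrootsP t (a : V) : a \in posroots m t ->
  [\/ a \in @minusroots m, a \in @plusroots m,
      t = TB /\ a \in @shortroots m | t = TC /\ a \in @longroots m].
Proof.
rewrite /posroots !mem_cat => /orP[|/orP[]]; try by move=> h; constructor.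
by case: t => // h; [apply: Or43 | apply: Or44].
Qed.

Lemma ltn_neq {i j : 'I_m} : (i < j)%N -> (i == j) = false.
Proof. by move=> h; apply/eqP => e; move: h; rewrite e ltnn. Qed.

Definition fp (y : V) := exists i : 'I_m, 0 < y 0 i /\ forall k : 'I_m, (k < i)%N -> y 0 k = 0.

Lemma fp_opp y : fp y -> fp (-y) -> False.
Proof.
move=> [i [yi yk]] [j [yj yk']].
case: (ltngtP i j) => [ij|ji|/val_inj e].
- by move: (yk' _ ij); rewrite mxE => /eqP; rewrite oppr_eq0 => /eqP h; move: yi; rewrite h ltxx.
- by move: yj; rewrite mxE (yk _ ji) oppr0 ltxx.
- by move: yj; rewrite mxE -e oppr_gt0 => h; move: (lt_trans h yi); rewrite ltxx.
Qed.

Lemma fp_pos t (a : V) : a \in posroots m t -> fp a.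
Proof.
case/posrootsP => [/minusP[i [j [ij ->]]] | /plusP[i [j [ij ->]]] | [_ /shortP[i ->]] | [_ /longP[i ->]]];
  exists i; rewrite !mxE ?epsE ?eqxx ?ltn_neq //=.
all: split; rewrite ?subr0 ?addr0 ?mulr1 //; move=> k ki.
all: rewrite !mxE ?epsE ?eqxx ?(ltn_neq ki) ?(ltn_neq (ltn_trans ki ij)) ?subr0 ?addr0 ?mulr0 //.
Qed.

Lemma opp_notin t (a : V) : a \in posroots m t -> - a \notin posroots m t.
Proof. by move=> h; apply/negP => h'; case: (fp_opp (fp_pos h) (fp_pos h')). Qed.

End Roots2.

Section Refl.
Variable m : nat.
Local Notation V := 'rV[rat]_m.

Lemma two_neq0 : (2%:R : rat) != 0. Proof. by []. Qed.

Lemma reflE (b x : V) : refl b x = x - (2 * dot x b / dot b b) *: b.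
Proof. by []. Qed.

Lemma reflD (b x y : V) : refl b (x + y) = refl b x + refl b y.
Proof.
rewrite !reflE dotDl mulrDr mulrDl scalerDl opprD.
by rewrite addrACA.
Qed.

Lemma reflN (b x : V) : refl b (- x) = - refl b x.
Proof. by rewrite !reflE dotNl mulrN mulNr scaleNr opprB opprK addrC. Qed.

Lemma reflZ (b x : V) c : refl b (c *: x) = c *: refl b x.
Proof. by rewrite !reflE dotZl scalerBr scalerA mulrCA -!mulrA. Qed.

Lemma refl_orth (b x : V) : dot x b = 0 -> refl b x = x.
Proof. by move=> h; rewrite reflE h mulr0 mul0r scale0r subr0. Qed.

Lemma refl_dot (b x y : V) : dot b b != 0 -> dot (refl b x) (refl b y) = dot x y.
Proof.
move=> k0; rewrite !reflE.
set k := dot b b; set cx := 2 * dot x b / k; set cy := 2 * dot y b / k.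
rewrite !dotBl !dotBr !dotZl !dotZr.
have e1 : cx * k = 2 * dot x b by rewrite /cx divfK.
have e2 : cx * dot b y = cy * dot x b.
  rewrite /cx /cy (dotC b y) mulrAC -!mulrA; congr (_ * _); rewrite mulrCA; congr (_ * _); exact: mulrC.
rewrite -/k e2 (mulrCA cx cy k) e1.
have e3 : cy * (2 * dot x b) = cy * dot x b + cy * dot x b by rewrite mulrCA mulr_natl mulr2n.
by rewrite e3 opprD opprK addKr subrK.
Qed.

End Refl.

Section Sig.
Variable m : nat.
Local Notation V := 'rV[rat]_m.

Lemma norm_minus (i j : 'I_m) : i != j -> dot (eps i - eps j) (eps i - eps j) = 2%:R.
Proof.
move=> ij; rewrite dotBl !dotBr !dot_eps eqxx (negbTE ij) eq_sym (negbTE ij).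
by rewrite !eqxx subr0 sub0r opprK.
Qed.

Lemma norm_plus (i j : 'I_m) : i != j -> dot (eps i + eps j) (eps i + eps j) = 2%:R.
Proof.
move=> ij; rewrite dotDl !dotDr !dot_eps !eqxx (negbTE ij) eq_sym (negbTE ij).
by rewrite addr0 add0r.
Qed.

Lemma norm_short (i : 'I_m) : dot (eps i) (eps i) = 1.
Proof. by rewrite dot_eps eqxx. Qed.

Lemma norm_long (i : 'I_m) : dot (2%:R *: eps i) (2%:R *: eps i) = 4%:R.
Proof. by rewrite dotZl dotZr dot_eps eqxx mulr1. Qed.

Lemma ltn_neqo (i j : 'I_m) : (i < j)%N -> i != j.
Proof. by move=> h; rewrite ltn_neq. Qed.

Lemma norm_pos t (a : V) : a \in posroots m t -> dot a a != 0.
Proof.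
case/posrootsP => [/minusP[i [j [ij ->]]] | /plusP[i [j [ij ->]]] | [_ /shortP[i ->]] | [_ /longP[i ->]]].
- by rewrite norm_minus ?ltn_neqo.
- by rewrite norm_plus ?ltn_neqo.
- by rewrite norm_short.
- by rewrite norm_long.
Qed.

Definition Zv (x : V) := forall k, x 0 k \is a Num.int.

Lemma Zv_eps i : Zv (eps i).
Proof. by move=> k; rewrite epsE natr_int. Qed.

Lemma ZvD x y : Zv x -> Zv y -> Zv (x + y).
Proof. by move=> hx hy k; rewrite mxE rpredD. Qed.
Lemma ZvN x : Zv x -> Zv (- x).
Proof. by move=> hx k; rewrite mxE rpredN. Qed.
Lemma ZvZ c x : c \is a Num.int -> Zv x -> Zv (c *: x).
Proof. by move=> hc hx k; rewrite mxE rpredM. Qed.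

Lemma dot_Z x y : Zv x -> Zv y -> dot x y \is a Num.int.
Proof. by move=> hx hy; apply: rpred_sum => k _; rewrite rpredM. Qed.

Lemma mulKr' (a x : rat) : a != 0 -> a * x / a = x.
Proof. by move=> h; rewrite mulrAC divff ?mul1r. Qed.

Lemma refl_Z t (b x : V) : b \in posroots m t -> Zv x -> Zv (refl b x).
Proof.
move=> hb hx; rewrite reflE; apply: ZvD => //; apply: ZvN.
case/posrootsP: hb => [/minusP[i [j [ij ->]]] | /plusP[i [j [ij ->]]] | [_ /shortP[i ->]] | [_ /longP[i ->]]].
- rewrite norm_minus ?ltn_neqo // mulKr' //; apply: ZvZ; first by apply: dot_Z => //; apply: ZvD; [apply: Zv_eps | apply: ZvN; apply: Zv_eps].
  by apply: ZvD; [apply: Zv_eps | apply: ZvN; apply: Zv_eps].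
- rewrite norm_plus ?ltn_neqo // mulKr' //; apply: ZvZ; first by apply: dot_Z => //; apply: ZvD; apply: Zv_eps.
  by apply: ZvD; apply: Zv_eps.
- rewrite norm_short divr1; apply: ZvZ; last exact: Zv_eps.
  by rewrite rpredM ?natr_int // dot_Z //; apply: Zv_eps.
- rewrite norm_long dotZr dot_eps_r scalerA; apply: ZvZ; last exact: Zv_eps.
  have -> : 2%:R * (2%:R * x 0 i) / 4%:R = x 0 i.
    by rewrite mulrA -natrM mulKr'.
  by rewrite rpredM ?natr_int.
Qed.

Lemma sigmaD (D : seq V) x y : sigma D (x + y) = sigma D x + sigma D y.
Proof. by elim: D => //= b D IH; rewrite IH reflD. Qed.
Lemma sigmaN (D : seq V) x : sigma D (- x) = - sigma D x.
Proof. by elim: D => //= b D IH; rewrite IH reflN. Qed.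
Lemma sigmaZ (D : seq V) c x : sigma D (c *: x) = c *: sigma D x.
Proof. by elim: D => //= b D IH; rewrite IH reflZ. Qed.
Lemma sigmaB (D : seq V) x y : sigma D (x - y) = sigma D x - sigma D y.
Proof. by rewrite sigmaD sigmaN. Qed.

Lemma sigma_cons b (D : seq V) x : sigma (b :: D) x = refl b (sigma D x).
Proof. by []. Qed.

Lemma sigma_dot (D : seq V) x y : (forall b, b \in D -> dot b b != 0) ->
  dot (sigma D x) (sigma D y) = dot x y.
Proof.
elim: D => //= b D IH h; rewrite refl_dot ?h ?mem_head // IH // => c hc.
by apply: h; rewrite in_cons hc orbT.
Qed.

Lemma sigma_fix (D : seq V) x : (forall b, b \in D -> dot x b = 0) -> sigma D x = x.
Proof.
elim: D => //= b D IH h; rewrite IH ?refl_orth ?h ?mem_head // => c hc.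
by apply: h; rewrite in_cons hc orbT.
Qed.

Lemma sigma_Z t (D : seq V) x : {subset D <= posroots m t} -> Zv x -> Zv (sigma D x).
Proof.
elim: D => //= b D IH h hx; apply: (@refl_Z t); first by apply: h; rewrite mem_head.
by apply: IH => // c hc; apply: h; rewrite in_cons hc orbT.
Qed.

Lemma norm1 (y : V) : Zv y -> dot y y = 1 -> exists k (s : bool), y = (-1) ^+ s *: eps k.
Proof.
move=> hy hn.
case: (pickP (fun k => y 0 k != 0)) => [k yk|] /=; last first.
  move=> h0; move: hn; rewrite /dot big1 => [/eqP|i _]; first by rewrite eq_sym oner_eq0.
  by move: (h0 i) => /negbFE/eqP ->; rewrite mul0r.
move: hn; rewrite /dot (bigD1 k) //= => hn.
have h1 : 1 <= y 0 k * y 0 k by rewrite -expr2 sqr_intr_ge1.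
have h2 : 0 <= \sum_(i | i != k) y 0 i * y 0 i by apply: sumr_ge0 => i _; rewrite -expr2 sqr_ge0.
have h3 : \sum_(i | i != k) y 0 i * y 0 i = 0.
  apply/eqP; rewrite eq_le h2 andbT.
  by rewrite -(lerD2l (y 0 k * y 0 k)) hn addr0.
have h4 : y 0 k * y 0 k = 1 by move: hn; rewrite h3 addr0.
have h5 : forall i, i != k -> y 0 i = 0.
  move=> i ik.
  have nn : forall j, j != k -> 0 <= y 0 j * y 0 j by move=> j _; rewrite -expr2 sqr_ge0.
  by move: (psumr_eq0P nn h3 ik) => /eqP; rewrite mulf_eq0 orbb => /eqP.
have : (y 0 k ^+ 2 == 1) by rewrite expr2 h4.
rewrite sqrf_eq1 => /orP[] /eqP e.
- exists k, false; apply/rowP => i; rewrite expr0 scale1r epsE.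
  by case: (eqVneq i k) => [->|ik]; [rewrite e | rewrite h5].
- exists k, true; apply/rowP => i; rewrite expr1 mxE epsE.
  by case: (eqVneq i k) => [->|ik]; [rewrite e mulr1 | rewrite h5 // mulr0].
Qed.

End Sig.

Section Pairs.
Variable m : nat.
Local Notation V := 'rV[rat]_m.

Definition sv (s : bool) (k : 'I_m) : V := (-1) ^+ s *: eps k.

Lemma sv_neg s k : - sv s k = sv (~~ s) k.
Proof. by case: s; rewrite /sv /= ?expr1 ?expr0 ?scaleN1r ?scale1r ?opprK. Qed.

Lemma sv_coord s k (i : 'I_m) : sv s k 0 i = (-1) ^+ s * (i == k)%:R.
Proof. by rewrite mxE epsE. Qed.

Lemma svpair_mem t s1 s2 (k l : 'I_m) : k != l ->
  sv s1 k + sv s2 l \in posroots m t \/ - (sv s1 k + sv s2 l) \in posroots m t.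
Proof.
wlog kl : s1 s2 k l / (k < l)%N.
  move=> W kl; case: (ltngtP k l) => [h|h|h]; first exact: W.
  - by rewrite addrC; apply: W => //; rewrite eq_sym.
  - by move: kl; rewrite (val_inj h) eqxx.
move=> _; rewrite /posroots !mem_cat.
case: s1; case: s2; rewrite /sv /= ?expr1 ?expr0 ?scaleN1r ?scale1r.
- by right; rewrite opprD !opprK (mem_plus kl) ?orbT.
- by right; rewrite opprD opprK (mem_minus kl).
- by left; rewrite (mem_minus kl).
- by left; rewrite (mem_plus kl) ?orbT.
Qed.

Lemma svpair_opp t s1 s2 (k l : 'I_m) : k != l ->
  (- (sv s1 k + sv s2 l) \in posroots m t) = (sv s1 k + sv s2 l \notin posroots m t).
Proof.
move=> kl; case: (svpair_mem t s1 s2 kl) => h.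
- by rewrite h (negbTE (opp_notin h)).
- by move: (opp_notin h); rewrite opprK => /negbTE ->; rewrite h.
Qed.

Lemma svpair_norm s1 s2 (k l : 'I_m) : k != l -> dot (sv s1 k + sv s2 l) (sv s1 k + sv s2 l) = 2%:R.
Proof.
move=> kl; rewrite /sv dotDl !dotDr !dotZl !dotZr !dot_eps !eqxx (negbTE kl) eq_sym (negbTE kl).
rewrite !mulr0 !addr0 add0r !mulr1 -!expr2 -!exprM.
by case: s1; case: s2.
Qed.

End Pairs.

Section Tsec.
Variables (n : nat) (t : rtype) (tD : seq 'rV[rat]_n.+1).
Local Notation V := 'rV[rat]_n.+1.
Hypothesis (tDu : uniq tD) (tDs : {subset tD <= posroots n.+1 t})
  (tDo : forall a b, a \in tD -> b \in tD -> a != b -> dot a b = 0)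
  (tD0 : forall b, b \in tD -> b 0 ord0 = 0).

Local Notation T := (sigma tD).

Lemma tDn b : b \in tD -> dot b b != 0.
Proof. by move=> h; apply: (@norm_pos _ t); apply: tDs. Qed.

Lemma T_dot x y : dot (T x) (T y) = dot x y.
Proof. by apply: sigma_dot => b /tDn. Qed.

Lemma T_e0 : T (eps ord0) = eps ord0.
Proof. by apply: sigma_fix => b hb; rewrite dot_eps_l tD0. Qed.

Lemma T_coord0 x : T x 0 ord0 = x 0 ord0.
Proof. by rewrite -!dot_eps_r -T_e0 T_dot T_e0. Qed.

Lemma T_eps j : exists k s, T (eps j) = sv s k.
Proof.
apply: norm1; first by apply: (@sigma_Z _ t) => //; apply: Zv_eps.
by rewrite T_dot norm_short.
Qed.

Lemma sv_dot s1 s2 (k l : 'I_n.+1) : dot (sv s1 k) (sv s2 l) = (-1) ^+ s1 * ((-1) ^+ s2 * (k == l)%:R).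
Proof. by rewrite /sv dotZl dotZr dot_eps. Qed.

Lemma sign_neq0 (s : bool) : (-1) ^+ s != 0 :> rat.
Proof. by case: s; rewrite ?expr1 ?expr0 ?oppr_eq0 oner_eq0. Qed.

Lemma T_neq j j' k k' s s' : j != j' -> T (eps j) = sv s k -> T (eps j') = sv s' k' -> k != k'.
Proof.
move=> jj e e'; apply/negP => /eqP kk.
have := T_dot (eps j) (eps j'); rewrite e e' sv_dot dot_eps (negbTE jj) kk eqxx mulr1 /=.
by move/eqP; rewrite mulf_eq0 !(negbTE (sign_neq0 _)).
Qed.

Lemma T_epsn0 j : j != ord0 -> exists k s, k != ord0 /\ T (eps j) = sv s k.
Proof.
move=> j0; have [k [s e]] := T_eps j; exists k, s; split => //.
have e0 : T (eps ord0) = sv false ord0 by rewrite T_e0 /sv expr0 scale1r.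
by apply: (T_neq j0 e e0).
Qed.

End Tsec.

Section Hs.
Variable m : nat.
Local Notation V := 'rV[rat]_m.

Definition hs (y : V) := dot y (const_mx 1).

Lemma hs_eps k : hs (eps k) = 1.
Proof. by rewrite /hs dot_eps_l mxE. Qed.

Lemma hsE (y : V) : hs y = \sum_(j < m) y 0 j.
Proof. by rewrite /hs /dot; apply: eq_bigr => j _; rewrite mxE mulr1. Qed.

Lemma hs_refl (b y : V) : hs (refl b y) = hs y - (2 * dot y b / dot b b) * hs b.
Proof. by rewrite /hs reflE dotBl dotZl. Qed.

Lemma sum_hs (D : seq V) : uniq D -> (forall a b, a \in D -> b \in D -> a != b -> dot a b = 0) ->
  (forall b, b \in D -> dot b b != 0) ->
  \sum_(j < m) hs (sigma D (eps j)) = m%:R - \sum_(b <- D) 2 * hs b ^+ 2 / dot b b.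
Proof.
elim: D => [|b D IH] /=.
  by move=> _ _ _; rewrite big_nil subr0 (eq_bigr (fun _ => 1)) ?sumr_const ?card_ord // => j _; rewrite hs_eps.
move=> /andP[bD uD] ho hn.
have hoD : forall a c, a \in D -> c \in D -> a != c -> dot a c = 0.
  by move=> a c ha hc; apply: ho; rewrite in_cons ?ha ?hc orbT.
have hnD : forall c, c \in D -> dot c c != 0 by move=> c hc; apply: hn; rewrite in_cons hc orbT.
have fixb : sigma D b = b.
  apply: sigma_fix => c hc; apply: ho; rewrite ?mem_head ?in_cons ?hc ?orbT //.
  by apply/eqP => e; move: bD; rewrite e hc.
have hd : forall j, dot (sigma D (eps j)) b = b 0 j.
  by move=> j; rewrite -{1}fixb sigma_dot // dot_eps_l.
rewrite (eq_bigr (fun j => hs (sigma D (eps j)) - b 0 j * (2 / dot b b * hs b))); last first.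
  move=> j _; rewrite hs_refl hd; congr (_ - _).
  rewrite mulrC mulrA [hs b * (2 * _)]mulrCA [2 * (hs b * _) / _]mulrAC [b 0 j * _]mulrCA.
  by rewrite [hs b * _]mulrC.
rewrite sumrB IH // big_cons -mulr_suml -hsE opprD addrA.
rewrite [RHS]addrAC; congr (_ - _).
by rewrite mulrCA -expr2 mulrAC.
Qed.

End Hs.

Section Split.
Variable n : nat.
Local Notation V := 'rV[rat]_n.+1.

Definition Nm (x : V) : V := x - (2 * x 0 ord0) *: eps ord0.

Lemma refl_e0 x : refl (eps ord0) x = Nm x.
Proof. by rewrite reflE dot_eps_r norm_short divr1. Qed.

Lemma refl_2e0 x : refl (2%:R *: eps ord0) x = Nm x.
Proof.
rewrite reflE norm_long dotZr dot_eps_r scalerA /Nm; congr (_ - _ *: _).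
by rewrite mulrA -natrM mulKr' // mulrC.
Qed.

Lemma refl_Nm (b x : V) : b 0 ord0 = 0 -> refl b (Nm x) = Nm (refl b x).
Proof.
move=> b0; rewrite /Nm !reflE dotBl dotZl dot_eps_l b0 mulr0 subr0.
by rewrite !mxE b0 mulr0 oppr0 addr0 addrAC.
Qed.

Lemma sigma_split (r0 : V) (D : seq V) x : (forall y, refl r0 y = Nm y) ->
  (forall b, b \in D -> b != r0 -> b 0 ord0 = 0) -> uniq D -> r0 \in D ->
  sigma D x = Nm (sigma [seq b <- D | b != r0] x).
Proof.
move=> hr; elim: D => //= b D IH h0 /andP[bD uD].
case: (eqVneq b r0) => [eb|br] /=.
  subst b; move=> _; rewrite hr; congr (Nm (sigma _ x)).
  rewrite -{1}(filter_predT D); apply: eq_in_filter => c hc /=.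
  by apply/esym/negP => /eqP e; move: bD; rewrite -e hc.
rewrite in_cons eq_sym (negbTE br) /= => hD.
have hb : b 0 ord0 = 0 by apply: h0 => //; rewrite mem_head.
have h0' : forall c, c \in D -> c != r0 -> c 0 ord0 = 0 by move=> c hc; apply: h0; rewrite in_cons hc orbT.
by rewrite IH // refl_Nm.
Qed.

End Split.

Section Main.
Variables (n : nat) (t : rtype) (D tD : seq 'rV[rat]_n.+1).
Local Notation V := 'rV[rat]_n.+1.
Hypothesis (tDu : uniq tD) (tDs : {subset tD <= posroots n.+1 t})
  (tDo : forall a b, a \in tD -> b \in tD -> a != b -> dot a b = 0)
  (tD0 : forall b, b \in tD -> b 0 ord0 = 0)
  (hsig : forall x, sigma D x = Nm (sigma tD x)).

Local Notation T := (sigma tD).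
Local Notation Phi := (posroots n.+1 t).

Lemma Nm_id (y : V) : y 0 ord0 = 0 -> Nm y = y.
Proof. by move=> h; rewrite /Nm h mulr0 scale0r subr0. Qed.

Lemma sv0 s (k : 'I_n.+1) : k != ord0 -> sv s k 0 ord0 = 0.
Proof. by move=> k0; rewrite sv_coord eq_sym (negbTE k0) mulr0. Qed.

Lemma e0_pair s (k : 'I_n.+1) : k != ord0 -> eps ord0 + sv s k \in Phi.
Proof.
move=> k0; have lk : (@ord0 n < k)%N by rewrite lt0n.
rewrite /posroots !mem_cat; case: s; rewrite /sv /= ?expr1 ?expr0 ?scaleN1r ?scale1r.
- by rewrite (mem_minus lk).
- by rewrite (mem_plus lk) orbT.
Qed.

Lemma ord0_of (i : 'I_n.+1) : (i == ord0) = (nat_of_ord i == 0%N).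
Proof. by []. Qed.

Lemma Nm_c (c : rat) (w : V) : w 0 ord0 = 0 -> Nm (c *: eps ord0 + w) = w - c *: eps ord0.
Proof.
move=> w0; rewrite /Nm.
have -> : (c *: eps ord0 + w) 0 ord0 = c by rewrite mxE w0 addr0 mxE epsE eqxx mulr1.
have -> : (2 * c) *: eps ord0 = c *: eps ord0 + c *: eps ord0 :> V.
  by rewrite mulr_natl mulr2n scalerDl.
by rewrite opprD addrA [c *: _ + w]addrC addrK.
Qed.

Lemma e0E : eps ord0 = 1 *: eps ord0 :> V.
Proof. by rewrite scale1r. Qed.

Lemma ne0_eps (i : 'I_n.+1) : i != ord0 -> eps i 0 ord0 = 0.
Proof. by move=> i0; rewrite epsE eq_sym (negbTE i0). Qed.

Lemma lt_ne0 (i j : 'I_n.+1) : (i < j)%N -> j != ord0.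
Proof. by move=> ij; apply/eqP => e; move: ij; rewrite e. Qed.

Lemma T_sv (j : 'I_n.+1) : j != ord0 -> exists k s, k != ord0 /\ T (eps j) = sv s k.
Proof. by move=> j0; apply: (T_epsn0 tDs tD0 j0). Qed.

Lemma colone_ok (a : V) : a \in Phi -> a 0 ord0 != 0 -> - sigma D a \in Phi.
Proof.
move=> ha; rewrite hsig.
case/posrootsP: ha => [/minusP[i [j [ij ->]]] | /plusP[i [j [ij ->]]] | [tB /shortP[i ->]] | [tC /longP[i ->]]].
- case: (eqVneq i ord0) => [-> _|i0]; last first.
    by rewrite -dot_eps_r dotBl !dot_eps (negbTE i0) (negbTE (lt_ne0 ij)) subr0 eqxx.
  have [k [s [k0 e]]] := T_sv (lt_ne0 ij).
  by rewrite sigmaB T_e0 // e sv_neg e0E Nm_c ?sv0 // -e0E opprB sv_neg negbK e0_pair.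
- case: (eqVneq i ord0) => [-> _|i0]; last first.
    by rewrite -dot_eps_r dotDl !dot_eps (negbTE i0) (negbTE (lt_ne0 ij)) addr0 eqxx.
  have [k [s [k0 e]]] := T_sv (lt_ne0 ij).
  by rewrite sigmaD T_e0 // e e0E Nm_c ?sv0 // -e0E opprB sv_neg e0_pair.
- case: (eqVneq i ord0) => [-> _|i0]; last by rewrite -dot_eps_r dot_eps (negbTE i0) eqxx.
  rewrite T_e0 // e0E -[_ *: _]addr0 Nm_c ?mxE // sub0r opprK scale1r.
  by rewrite /posroots tB !mem_cat mem_short !orbT.
- case: (eqVneq i ord0) => [-> _|i0]; last by rewrite -dot_eps_r dotZl dot_eps (negbTE i0) mulr0 eqxx.
  rewrite sigmaZ T_e0 // -[_ *: _]addr0 Nm_c ?mxE // sub0r opprK.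
  by rewrite /posroots tC !mem_cat mem_long !orbT.
Qed.

Lemma long_opp s (k : 'I_n.+1) : t = TC ->
  (- (2%:R *: sv s k) \in Phi) = (2%:R *: sv s k \notin Phi).
Proof.
move=> tC; have h : 2%:R *: eps k \in Phi by rewrite /posroots tC !mem_cat mem_long !orbT.
case: s; rewrite /sv /= ?expr1 ?expr0 ?scaleN1r ?scale1r.
- by rewrite scalerN opprK h (negbTE (opp_notin h)).
- by rewrite h (negbTE (opp_notin h)).
Qed.

Lemma tphi_ok (a : V) : a \in Phi -> a 0 ord0 = 0 -> a \notin @shortroots n.+1 ->
  (- sigma D a \in Phi) = (T a \notin Phi).
Proof.
move=> ha a0 ns; rewrite hsig Nm_id; last by rewrite (T_coord0 tDs tD0) a0.
case/posrootsP: ha a0 ns => [/minusP[i [j [ij ->]]] | /plusP[i [j [ij ->]]] | [tB /shortP[i ->]] | [tC /longP[i ->]]].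
- case: (eqVneq i ord0) => [->|i0].
    by rewrite -dot_eps_r dotBl !dot_eps eqxx (negbTE (lt_ne0 ij)) subr0 => /eqP; rewrite oner_eq0.
  move=> _ _; have [k [s [k0 e]]] := T_sv i0; have [l [s' [l0 e']]] := T_sv (lt_ne0 ij).
  have kl := T_neq tDs (ltn_neqo ij) e e'.
  by rewrite sigmaB e e' sv_neg svpair_opp.
- case: (eqVneq i ord0) => [->|i0].
    by rewrite -dot_eps_r dotDl !dot_eps eqxx (negbTE (lt_ne0 ij)) addr0 => /eqP; rewrite oner_eq0.
  move=> _ _; have [k [s [k0 e]]] := T_sv i0; have [l [s' [l0 e']]] := T_sv (lt_ne0 ij).
  have kl := T_neq tDs (ltn_neqo ij) e e'.
  by rewrite sigmaD e e' svpair_opp.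
- by rewrite mem_short.
- case: (eqVneq i ord0) => [->|i0].
    by rewrite -dot_eps_r dotZl dot_eps eqxx mulr1 => /eqP; rewrite pnatr_eq0.
  move=> _ _; have [k [s [k0 e]]] := T_sv i0.
  by rewrite sigmaZ e long_opp.
Qed.

Lemma count_enum_sum (P : pred 'I_n.+1) : (count P (enum 'I_n.+1))%:R = \sum_(j < n.+1) (P j)%:R :> rat.
Proof. rewrite -sum1_count big_mkcond big_enum /= natr_sum; apply: eq_bigr => j _; by case: (P j). Qed.

Lemma sum4 (s : seq V) (F : V -> rat) (P : pred V) : (forall b, b \in s -> F b = (4 * P b)%:R) ->
  \sum_(b <- s) F b = (4 * count P s)%:R.
Proof.
elim: s => [|b s IH] h; first by rewrite big_nil.
rewrite big_cons /= IH ?h ?mem_head // ?mulnDr ?natrD // => c hc.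
by apply: h; rewrite in_cons hc orbT.
Qed.

Lemma hs_sv s (k : 'I_n.+1) : hs (sv s k) = (-1) ^+ s.
Proof. by rewrite /hs /sv dotZl -/(hs _) hs_eps mulr1. Qed.

Lemma neg_count : t = TB -> (forall b, b \in tD -> b \notin @shortroots n.+1) ->
  count (fun j : 'I_n.+1 => - T (eps j) \in Phi) (enum 'I_n.+1) =
  (2 * count (fun b => b \in @plusroots n.+1) tD)%N.
Proof.
move=> tB tDns; apply/eqP; rewrite -(eqr_nat rat); apply/eqP; apply: (@mulIf _ 2%:R) => //.
rewrite count_enum_sum mulr_suml.
rewrite (eq_bigr (fun j => 1 - hs (T (eps j)))); last first.
  move=> j _; have [k [s e]] := T_eps tDs j; rewrite e hs_sv.
  have hk : eps k \in Phi by rewrite /posroots tB !mem_cat mem_short !orbT.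
  move: e; case: s => e; rewrite /sv /= ?expr1 ?expr0 ?scaleN1r ?scale1r ?opprK.
  - by rewrite hk mul1r.
  - by rewrite (negbTE (opp_notin hk)) mul0r subrr.
rewrite sumrB sumr_const card_ord sum_hs //; last by move=> b /tDs /norm_pos.
rewrite opprB addrC subrK.
rewrite (@sum4 _ _ (fun b => b \in @plusroots n.+1)); first by rewrite -natrM mulnAC.
move=> b hb; have bP := tDs hb; have b0 := tD0 hb.
have hsP : forall c, c \in @plusroots n.+1 -> hs c = 2%:R.
  by move=> c /plusP[i [j [ij ->]]]; rewrite /hs dotDl -!/(hs _) !hs_eps.
case/posrootsP: bP => [/minusP[i [j [ij e]]] | bp | [_ bs] | [tC _]].
- have -> : (b \in @plusroots n.+1) = false.
    apply/negP => /hsP; rewrite e /hs dotBl -!/(hs _) !hs_eps subrr => /eqP.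
    by rewrite eq_sym pnatr_eq0.
  by rewrite e /hs dotBl -!/(hs _) !hs_eps subrr expr0n mulr0 mul0r.
- case: (plusP bp) => i [j [ij e]].
  by rewrite bp hsP // e norm_plus ?ltn_neqo // mulKr' // -natrX.
- by move: (tDns _ hb); rewrite bs.
- by rewrite tC in tB.
Qed.

End Main.

Lemma cnt_split (T : Type) (p q : pred T) s :
  count p s = (count (predI p q) s + count (predI p (predC q)) s)%N.
Proof.
elim: s => //= x s ->; rewrite addnACA; congr (_ + _)%N; by case: (p x); case: (q x).
Qed.

Section Norms.
Variable m : nat.
Local Notation V := 'rV[rat]_m.

Lemma notshort (y : V) : dot y y != 1 -> y \notin @shortroots m.
Proof. by move=> h; apply/negP => /shortP[i e]; move: h; rewrite e norm_short eqxx. Qed.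

Lemma normB (a : V) : a \in posroots m TB -> a \notin @shortroots m -> dot a a = 2%:R.
Proof.
case/posrootsP => [/minusP[i [j [ij ->]]] | /plusP[i [j [ij ->]]] | [_ h] | [//]].
- by rewrite norm_minus ?ltn_neqo.
- by rewrite norm_plus ?ltn_neqo.
- by rewrite h.
Qed.

Lemma normC (a : V) : a \in posroots m TC -> dot a a != 1.
Proof.
case/posrootsP => [/minusP[i [j [ij ->]]] | /plusP[i [j [ij ->]]] | [//] | [_ /longP[i ->]]].
- by rewrite norm_minus ?ltn_neqo.
- by rewrite norm_plus ?ltn_neqo.
- by rewrite norm_long.
Qed.

End Norms.

Lemma e00 n : (eps (@ord0 n)) 0 ord0 = 1.
Proof. by rewrite epsE eqxx. Qed.

Lemma partA (n : nat) (D : seq 'rV[rat]_n.+1) :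
     orthoset TB D ->
     eps ord0 \in D ->
     (forall k : 'I_n.+1, k != ord0 -> eps k \notin D) ->
     let tD := [seq b <- D | b \in tPhiB n] in
     wlength (@posroots n.+1 TB) (sigma D) =
       (wlength' (tPhiB n) (sigma tD) + size (colone n TB)
        + 2 * count (fun b => b \in @plusroots n.+1) tD)%N.
Proof.
move=> [uD sD oD] e0D nsD tD.
have b00 : forall b, b \in D -> b != eps ord0 -> b 0 ord0 = 0.
  by move=> b hb ne; rewrite -dot_eps_r oD.
have htD : forall b, b \in D -> (b != eps ord0) = (b \in tPhiB n).
  move=> b hb; rewrite /tPhiB mem_filter (sD _ hb) andbT.
  case: (eqVneq b (eps ord0)) => [->|ne]; first by rewrite e00 oner_eq0.
  rewrite (b00 _ hb ne) eqxx /=; apply/esym/negP => /shortP[k e].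
  have k0 : k != ord0 by apply/eqP => e'; move: ne; rewrite e e' eqxx.
  by move: (nsD k k0); rewrite -e hb.
have filt : [seq b <- D | b != eps ord0] = tD by apply: eq_in_filter.
have hsig : forall x, sigma D x = Nm (sigma tD x).
  by move=> x; rewrite -filt; apply: sigma_split => //; apply: refl_e0.
have tDu : uniq tD by apply: filter_uniq.
have tDD : {subset tD <= D} by move=> b; rewrite mem_filter => /andP[].
have tDP : forall b, b \in tD -> b \in tPhiB n by move=> b; rewrite mem_filter => /andP[].
have tDs : {subset tD <= posroots n.+1 TB}.
  by move=> b /tDP; rewrite mem_filter => /andP[].
have tD0 : forall b, b \in tD -> b 0 ord0 = 0.
  by move=> b /tDP; rewrite mem_filter => /andP[/andP[/eqP]].
have tDns : forall b, b \in tD -> b \notin @shortroots n.+1.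
  by move=> b /tDP; rewrite mem_filter => /andP[/andP[]].
have tDo : forall a b, a \in tD -> b \in tD -> a != b -> dot a b = 0.
  by move=> a b /tDD ha /tDD hb; apply: oD.
set Phi := posroots n.+1 TB.
set p := fun a => - sigma D a \in Phi.
pose q1 := fun a : 'rV[rat]_n.+1 => a 0 ord0 != 0.
pose qs := fun a : 'rV[rat]_n.+1 => a \in @shortroots n.+1.
rewrite /wlength -/p (cnt_split p q1) (cnt_split (predI p (predC q1)) qs).
have E1 : count (predI p q1) Phi = size (colone n TB).
  rewrite -count_filter -/(colone n TB) -count_predT; apply: eq_in_count => a.
  rewrite mem_filter => /andP[a0 ha]; apply: (colone_ok tDs tD0 hsig ha a0).
have E3 : count (predI (predI p (predC q1)) (predC qs)) Phi
   = wlength' (tPhiB n) (sigma tD).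
  rewrite /wlength' /tPhiB count_filter; apply: eq_in_count => a ha /=.
  rewrite /p /q1 /qs /= negbK.
  case a0 : (a 0 ord0 == 0); case ns : (a \in @shortroots n.+1); rewrite /= ?andbF ?andbT //.
  rewrite (tphi_ok tDs tD0 hsig ha (eqP a0) (negbT ns)) mem_filter (T_coord0 tDs tD0) (eqP a0) eqxx /=.
  by rewrite notshort // (T_dot tDs) (normB ha (negbT ns)).
have E2 : count (predI (predI p (predC q1)) qs) Phi
   = (2 * count (fun b => b \in @plusroots n.+1) tD)%N.
  rewrite -(neg_count tDu tDs tDo tD0) // {1}/Phi /posroots !count_cat.
  rewrite (@eq_in_count _ _ pred0 (minusroots n.+1)) ?count_pred0; last first.
    move=> a /minusP[i [j [ij ->]]] /=; rewrite /qs (negbTE (notshort _)) ?andbF //.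
    by rewrite norm_minus ?ltn_neqo.
  rewrite (@eq_in_count _ _ pred0 (plusroots n.+1)) ?count_pred0; last first.
    move=> a /plusP[i [j [ij ->]]] /=; rewrite /qs (negbTE (notshort _)) ?andbF //.
    by rewrite norm_plus ?ltn_neqo.
  rewrite -/(posroots n.+1 TB) -/Phi /shortroots count_map add0n; apply: eq_count => j /=.
  rewrite /p /q1 /qs mem_short andbT.
  case: (eqVneq j ord0) => [->|j0].
    rewrite e00 oner_eq0 andbF (T_e0 tD0).
    by rewrite (negbTE (opp_notin (t := TB) _)) // /posroots !mem_cat mem_short !orbT.
  rewrite -dot_eps_r dot_eps (negbTE j0) eqxx andbT hsig Nm_id //.
  by rewrite (T_coord0 tDs tD0) -dot_eps_r dot_eps (negbTE j0).
by rewrite E1 E2 E3 addnA [(_ + size _)%N]addnC addnAC.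
Qed.

Lemma partB (n : nat) (D : seq 'rV[rat]_n.+1) :
     orthoset TC D ->
     (forall b, b \in D -> (b 0 ord0 != 0) = (b == 2%:R *: eps ord0)) ->
     2%:R *: eps ord0 \in D ->
     let tD := [seq b <- D | b \in tPhiC n] in
     wlength (@posroots n.+1 TC) (sigma D) =
       (wlength' (tPhiC n) (sigma tD) + size (colone n TC))%N.
Proof.
move=> [uD sD oD] hD e0D tD.
have b00 : forall b, b \in D -> b != 2%:R *: eps ord0 -> b 0 ord0 = 0.
  by move=> b hb ne; apply/eqP; rewrite -[_ == 0]negbK hD // ne.
have htD : forall b, b \in D -> (b != 2%:R *: eps ord0) = (b \in tPhiC n).
  by move=> b hb; rewrite /tPhiC mem_filter (sD _ hb) andbT -hD // negbK.
have filt : [seq b <- D | b != 2%:R *: eps ord0] = tD by apply: eq_in_filter.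
have hsig : forall x, sigma D x = Nm (sigma tD x).
  by move=> x; rewrite -filt; apply: sigma_split => //; apply: refl_2e0.
have tDu : uniq tD by apply: filter_uniq.
have tDD : {subset tD <= D} by move=> b; rewrite mem_filter => /andP[].
have tDP : forall b, b \in tD -> b \in tPhiC n by move=> b; rewrite mem_filter => /andP[].
have tDs : {subset tD <= posroots n.+1 TC}.
  by move=> b /tDP; rewrite mem_filter => /andP[].
have tD0 : forall b, b \in tD -> b 0 ord0 = 0.
  by move=> b /tDP; rewrite mem_filter => /andP[/eqP].
have tDo : forall a b, a \in tD -> b \in tD -> a != b -> dot a b = 0.
  by move=> a b /tDD ha /tDD hb; apply: oD.
set Phi := posroots n.+1 TC.
set p := fun a => - sigma D a \in Phi.
pose q1 := fun a : 'rV[rat]_n.+1 => a 0 ord0 != 0.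
rewrite /wlength -/p (cnt_split p q1).
have E1 : count (predI p q1) Phi = size (colone n TC).
  rewrite -count_filter -/(colone n TC) -count_predT; apply: eq_in_count => a.
  rewrite mem_filter => /andP[a0 ha]; apply: (colone_ok tDs tD0 hsig ha a0).
have E3 : count (predI p (predC q1)) Phi = wlength' (tPhiC n) (sigma tD).
  rewrite /wlength' /tPhiC count_filter; apply: eq_in_count => a ha /=.
  rewrite /p /q1 /= negbK.
  case a0 : (a 0 ord0 == 0); rewrite /= ?andbF ?andbT //.
  rewrite (tphi_ok tDs tD0 hsig ha (eqP a0) (notshort (normC ha))) mem_filter.
  by rewrite (T_coord0 tDs tD0) (eqP a0) eqxx.
by rewrite E1 E3 addnC.
Qed.

Theorem lemma3p4 :
  (forall (n : nat) (D : seq 'rV[rat]_n.+1),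
     orthoset TB D ->
     eps ord0 \in D ->
     (forall k : 'I_n.+1, k != ord0 -> eps k \notin D) ->
     let tD := [seq b <- D | b \in tPhiB n] in
     wlength (@posroots n.+1 TB) (sigma D) =
       (wlength' (tPhiB n) (sigma tD) + size (colone n TB)
        + 2 * count (fun b => b \in @plusroots n.+1) tD)%N)
  /\
  (forall (n : nat) (D : seq 'rV[rat]_n.+1),
     orthoset TC D ->
     (forall b, b \in D -> (b 0 ord0 != 0) = (b == 2%:R *: eps ord0)) ->
     2%:R *: eps ord0 \in D ->
     let tD := [seq b <- D | b \in tPhiC n] in
     wlength (@posroots n.+1 TC) (sigma D) =
       (wlength' (tPhiC n) (sigma tD) + size (colone n TC))%N).
Proof. split; [exact: partA | exact: partB]. Qed.
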